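(* Let $M=(X,rk)$ be a matroid on a finite ground set $X$ with rank $r=rk(X)$. Then for every integer $i$ with $i>r-d_2(M)$, \[[x^i]T_M(x,1)=\binom{|X|-i-1}{r-i}-\sum_{\substack{C\in \mathcal{C}(M),\\ |C|<d_2(M)}} \binom{|X|-|C|-i-1}{|X|-r-1}.\]
   Context: $T_M(x,y)=\sum_{A\subseteq X}(x-1)^{r-rk(A)}(y-1)^{|A|-rk(A)}$ is the Tutte polynomial of $M$, and $[x^i]f(x)$ denotes the coefficient of $x^i$. A circuit of $M$ is a set $C\subseteq X$ with $rk(C\setminus\{e\})=|C|-1=rk(C)$ for all $e\in C$; $\mathcal{C}(M)$ is the set of all circuits. Let $\mathcal{D}(M)=\{A\subseteq X: rk(A\setminus\{e\})=rk(A)\text{ for every } e\in A\}$ and, for $k\ge1$, $d_k(M)=\min\{|A|: A\in\mathcal{D}(M),\ rk(A)=|A|-k\}$. *)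

(* Defs.v *)
From HB Require Import structures.
From mathcomp Require Import all_boot all_order all_algebra.
Set Implicit Arguments. Unset Strict Implicit. Unset Printing Implicit Defensive.
Import Order.TTheory GRing.Theory Num.Theory.

Record matroid (T : finType) := Matroid {
  rk : {set T} -> nat;
  rk_le_card : forall A : {set T}, rk A <= #|A|;
  rk_mono : forall A B : {set T}, A \subset B -> rk A <= rk B;
  rk_submod : forall A B : {set T},
      rk (A :|: B) + rk (A :&: B) <= rk A + rk B
}.

Section Defs.
Variables (T : finType) (M : matroid T).

Definition mrank : nat := rk M [set: T].

(* Tutte polynomial T_M(x,y) = sum_A (x-1)^(r-rk A) (y-1)^(|A|-rk A),
   as a polynomial in x (outer variable) with coefficients in Z[y]. *)
Local Open Scope ring_scope.
Definition tutte : {poly {poly int}} :=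
  \sum_(A : {set T})
     ('X - 1) ^+ (mrank - rk M A)%N * (('X - 1)%:P) ^+ (#|A| - rk M A)%N.

Definition tutte_x1 : {poly int} := map_poly (fun q : {poly int} => q.[1]) tutte.
Local Close Scope ring_scope.

(* C is a circuit: rk(C \ e) = |C| - 1 = rk(C) for all e in C
   (written with additions to avoid truncated subtraction). *)
Definition is_circuit (C : {set T}) : bool :=
  (rk M C + 1 == #|C|) && [forall e in C, rk M (C :\ e) + 1 == #|C|].

Definition inD (A : {set T}) : bool :=
  [forall e in A, rk M (A :\ e) == rk M A].

(* d_k(M) = min{|A| : A in D(M), rk(A) = |A| - k}  (meaningful when such an
   A exists; the default value #|T|.+1 is never used in the theorem, which
   assumes existence). *)
Definition dk (k : nat) : nat :=
  \big[minn/#|T|.+1]_(A : {set T} | inD A && (rk M A + k == #|A|)) #|A|.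
End Defs.

Definition binz (n k : int) : int :=
  if (0 <= n)%R && (0 <= k)%R then Posz ('C(absz n, absz k)) else 0%R.

(* Main.v *)
Require Import Defs.
From HB Require Import structures.
From mathcomp Require Import all_boot all_order all_algebra.
From mathcomp Require Import zify.
Import Order.TTheory GRing.Theory Num.Theory.

Section Mat.
Variables (T : finType) (M : matroid T).
Local Notation rk := (rk M).

Lemma rk_sub_le {C A : {set T}} : C \subset A -> rk A <= rk C + #|A :\: C|.
Proof.
move=> sCA.
have := rk_submod M C (A :\: C).
have -> : C :|: A :\: C = A.
  apply/setP => x; rewrite !inE; case xC: (x \in C) => //=.
  by rewrite (subsetP sCA).
move=> h; have := rk_le_card M (A :\: C); lia.
Qed.

Lemma indep_sub {C A : {set T}} : C \subset A -> rk A = #|A| -> rk C = #|C|.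
Proof.
move=> sCA hA; have := rk_sub_le sCA; rewrite cardsDS // hA.
have := rk_le_card M C; have := subset_leq_card sCA; lia.
Qed.

Lemma circuitE {C : {set T}} : is_circuit M C ->
  rk C + 1 = #|C| /\ forall e, e \in C -> rk (C :\ e) + 1 = #|C|.
Proof.
by case/andP => /eqP h /forall_inP h2; split => // e /h2 /eqP.
Qed.

Lemma circuit_proper {C B : {set T}} : is_circuit M C -> B \proper C -> rk B = #|B|.
Proof.
move=> /circuitE [h1 h2] /properP [sBC [e eC eB]].
have sB : B \subset C :\ e.
  by apply/subsetP => x xB; rewrite !inE (subsetP sBC) // andbT; apply: contraNneq eB => <-.
apply: (indep_sub sB); have := h2 e eC; rewrite (cardsD1 e C) eC; lia.
Qed.

Lemma circuit_not_indep (C A : {set T}) : is_circuit M C -> C \subset A -> rk A = #|A| -> False.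
Proof.
move=> hC sCA hA; have := indep_sub sCA hA; have [h1 _] := circuitE hC; lia.
Qed.

Lemma exists_circuit (A : {set T}) : rk A < #|A| -> exists2 C, is_circuit M C & C \subset A.
Proof.
move=> hA.
have [C /minsetP [PC minC] sCA] := @minset_exists T (fun B : {set T} => rk B < #|B|) A hA.
exists C => //.
have Cn0 : C != set0 by apply: contraTneq PC => ->; rewrite cards0.
have [e eC] := set0Pn C Cn0.
have hind : forall x, x \in C -> rk (C :\ x) + 1 = #|C|.
  move=> x xC; have h : ~~ (rk (C :\ x) < #|C :\ x|).
    apply/negP => h; have := minC _ h (subD1set C x) => /setP /(_ x).
    by rewrite !inE xC eqxx.
  have := rk_le_card M (C :\ x); rewrite (cardsD1 x C) xC in PC *; lia.
apply/andP; split.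
  have := rk_mono M (subD1set C e); have := hind e eC; lia.
by apply/forall_inP => x xC; rewrite (hind x xC).
Qed.

Definition d2 := dk M 2.

Lemma d2_le (S : {set T}) : inD M S -> rk S + 2 = #|S| -> d2 <= #|S|.
Proof.
move=> h1 h2; rewrite /d2 /dk.
have PS : inD M S && (rk S + 2 == #|S|) by rewrite h1 h2 eqxx.
have := mem_index_enum S; rewrite unlock; elim: (index_enum _) => //= B l ih.
rewrite inE => /orP [/eqP <- | /ih h]; first by rewrite PS geq_minl.
by case: ifP => // _; apply: leq_trans h; apply: geq_minr.
Qed.

Lemma small_nullity (A : {set T}) : #|A| < d2 -> #|A| <= rk A + 1.
Proof.
move=> hA; rewrite leqNgt; apply/negP => hn.
have hn' : rk A + 2 <= #|A| by lia.
have [S /minsetP [PS minS] sSA] := @minset_exists T (fun B : {set T} => rk B + 2 <= #|B|) A hn'.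
have Sn0 : S != set0 by apply: contraTneq PS => ->; rewrite cards0; lia.
have [e eS] := set0Pn S Sn0.
have hx : forall x, x \in S -> rk (S :\ x) + 2 >= #|S|.
  move=> x xS; have h : ~~ (rk (S :\ x) + 2 <= #|S :\ x|).
    apply/negP => h; have := minS _ h (subD1set S x) => /setP /(_ x).
    by rewrite !inE xS eqxx.
  rewrite (cardsD1 x S) xS in PS *; lia.
have hmono : forall x, rk (S :\ x) <= rk S by move=> x; apply: rk_mono; exact: subD1set.
have eq2 : rk S + 2 = #|S| by have := hx e eS; have := hmono e; lia.
have inDS : inD M S.
  apply/forall_inP => x xS; apply/eqP; have := hx x xS; have := hmono x; lia.
have := d2_le _ inDS eq2; have := subset_leq_card sSA; lia.
Qed.

Lemma circuit_unique (A C1 C2 : {set T}) : #|A| < d2 -> is_circuit M C1 -> is_circuit M C2 ->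
  C1 \subset A -> C2 \subset A -> C1 = C2.
Proof.
move=> hA h1 h2 s1 s2; apply/eqP; apply/negPn/negP => ne.
have n12 : ~~ (C1 \subset C2).
  apply/negP => s12.
  have p : C1 \proper C2 by rewrite properEneq ne.
  have := circuit_proper h2 p; have [e1 _] := circuitE h1; lia.
have pI : C1 :&: C2 \proper C1.
  rewrite properEneq subsetIl andbT; apply: contra n12 => /eqP <-; exact: subsetIr.
have hI := circuit_proper h1 pI.
have hs := rk_submod M C1 C2.
have hu := cardsUI C1 C2.
have [e1 _] := circuitE h1; have [e2 _] := circuitE h2.
have sU : C1 :|: C2 \subset A by rewrite subUset s1 s2.
have := small_nullity _ (leq_ltn_trans (subset_leq_card sU) hA).
lia.
Qed.
End Mat.
Arguments rk_sub_le {T M C A}.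
Arguments circuit_not_indep {T M C A}.
Arguments exists_circuit {T M A}.
Arguments circuit_unique {T M A C1 C2}.

Local Open Scope ring_scope.
Lemma Pcoef (m R i : nat) : (R < m)%N ->
  \sum_(k < R.+1) (('X - 1 : {poly int}) ^+ (R - k))`_i *+ 'C(m, k)
  = (if (i <= R)%N then 'C(m - 1 - i, R - i) else 0%N)%:Z.
Proof.
elim: R i => [|R IH] i hR.
  rewrite big_ord1 /= subnn expr0 bin0 mulr1n coef1.
  by case: i => [|i] /=; [rewrite subnn bin0|].
rewrite big_ord_recr /= subnn expr0 coef1.
have hR' : (R < m)%N by apply: ltnW.
case: i => [|j] /=.
  have IH0 := IH 0%N hR'; rewrite leq0n !subn0 in IH0.
  have -> : \sum_(k < R.+1) (('X - 1 : {poly int}) ^+ (R.+1 - widen_ord (leqnSn R.+1) k))`_0 *+ 'C(m, widen_ord (leqnSn R.+1) k)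
    = - ('C(m - 1, R))%:Z.
    rewrite -IH0 -sumrN; apply: eq_bigr => k _ /=.
    by rewrite subSn ?(ltn_ord k : (k <= R)%N) // exprS mulrBl mul1r coefB coefXM /= mulrnBl mul0rn sub0r.
  rewrite !subn0.
  have -> : m = (m - 1).+1 by lia.
  rewrite binS -addn1 subnK; last by lia.
  rewrite natz PoszD; lia.
have IHa := IH j hR'; have IHb := IH j.+1 hR'.
have -> : \sum_(k < R.+1) (('X - 1 : {poly int}) ^+ (R.+1 - widen_ord (leqnSn R.+1) k))`_j.+1 *+ 'C(m, widen_ord (leqnSn R.+1) k)
  = (if (j <= R)%N then 'C(m - 1 - j, R - j) else 0%N)%:Z - (if (j.+1 <= R)%N then 'C(m - 1 - j.+1, R - j.+1) else 0%N)%:Z.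
  rewrite -IHa -IHb -sumrB; apply: eq_bigr => k _ /=.
  by rewrite subSn ?(ltn_ord k : (k <= R)%N) // exprS mulrBl mul1r coefB coefXM /= mulrnBl.
rewrite mul0rn addr0.
case: (ltngtP j R) => hj.
- rewrite ltnS (ltnW hj).
  have -> : (m - 1 - j = (m - 1 - j.+1).+1)%N by lia.
  have -> : (R - j = (R - j.+1).+1)%N by lia.
  rewrite binS.
  have -> : (R.+1 - j.+1 = (R - j.+1).+1)%N by lia.
  rewrite PoszD; lia.
- by rewrite ltnS leqNgt hj.
- subst j; rewrite ltnS leqnn subSS !subnn !bin0; lia.
Qed.
Lemma sub_sum (T : finType) (D : {set T}) (F : nat -> int) :
  \sum_(B : {set T} | B \subset D) F #|B| = \sum_(k < #|D|.+1) F k *+ 'C(#|D|, k).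
Proof.
rewrite (partition_big (fun B : {set T} => (inord #|B| : 'I_#|D|.+1)) predT) //=.
apply: eq_bigr => k _.
rewrite -cards_draws -sumr_const.
rewrite (eq_bigl (fun B : {set T} => B \in [set A : {set T} | A \subset D & #|A| == k])); last first.
  move=> B; rewrite inE; case sBD: (B \subset D) => //=.
  have hB : (#|B| < #|D|.+1)%N by rewrite ltnS subset_leq_card.
  apply/eqP/eqP => [h|h]; first by rewrite -h inordK.
  by apply: val_inj; rewrite /= inordK h.
by apply: eq_bigr => B; rewrite inE => /andP [_ /eqP ->].
Qed.

Lemma sup_sum (T : finType) (C : {set T}) (F : nat -> int) :
  \sum_(A : {set T} | C \subset A) F #|A| = \sum_(B : {set T} | B \subset ~: C) F (#|B| + #|C|)%N.
Proof.
rewrite (reindex_onto (fun B => B :|: C) (fun A => A :\: C)); last first.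
  move=> A sCA; apply/setP => x; rewrite !inE; case xC: (x \in C) => //=.
    by rewrite (subsetP sCA).
  by rewrite orbF.
apply: eq_big => B.
  rewrite subsetUr /=; apply/eqP/idP => [<-|h].
    by apply/subsetP => x; rewrite !inE => /andP [].
  apply/setP => x; rewrite !inE; case xC: (x \in C) => /=.
    by apply/esym/negbTE/negP => xB; have := subsetP h x xB; rewrite inE xC.
  by rewrite orbF.
move=> /andP [_ /eqP h]; congr F; rewrite cardsU.
have -> : B :&: C = set0.
  apply/setP => x; rewrite !inE; apply/negP => /andP [xB xC].
  by move: xB; rewrite -h !inE xC.
by rewrite cards0 subn0.
Qed.
Lemma tutte_coef (T : finType) (M : matroid T) i : (tutte_x1 M)`_i =
  \sum_(A : {set T}) (if rk M A == #|A| then (('X - 1 : {poly int})^+(mrank M - #|A|))`_i else 0).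
Proof.
rewrite /tutte_x1 /tutte.
rewrite (_ : (fun q : {poly int} => q.[1]) = horner_eval 1) //.
rewrite rmorph_sum coef_sum; apply: eq_bigr => A _.
rewrite rmorphM rmorphXn rmorphB /= map_polyX rmorph1 rmorphXn /= map_polyC /=.
rewrite /horner_eval !hornerE subrr polyC0 expr0n.
have := rk_le_card M A.
case: (rk M A =P #|A|) => [->|ne] hle; first by rewrite subnn eqxx mulr1.
have -> : (#|A| - rk M A == 0)%N = false by apply/negbTE; lia.
by rewrite mulr0 coef0.
Qed.
Lemma coef_big (j i : nat) : (j < i)%N -> (('X - 1 : {poly int})^+j)`_i = 0.
Proof. by move=> h; apply: nth_default; rewrite -polyC1 size_exp_XsubC. Qed.

Lemma widen_sum (N R : nat) (G : nat -> int) (H : nat -> nat) : (R <= N)%N ->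
  \sum_(k < N.+1) (if (k <= R)%N then G k else 0) *+ H k = \sum_(k < R.+1) G k *+ H k.
Proof.
move=> hRN; rewrite (big_ord_widen N.+1 (fun k => G k *+ H k)) ?ltnS // [RHS]big_mkcond.
by apply: eq_bigr => k _; rewrite ltnS; case: ifP => //; rewrite mul0rn.
Qed.

Lemma binz_nat (a b : nat) : binz a%:Z b%:Z = 'C(a, b)%:Z.
Proof. by []. Qed.

Lemma binz_negr (a b : int) : b < 0 -> binz a b = 0.
Proof. by rewrite /binz ltNge => /negbTE ->; rewrite andbF. Qed.

Lemma binz_negl (a b : int) : a < 0 -> binz a b = 0.
Proof. by rewrite /binz ltNge => /negbTE ->. Qed.

Theorem theorem3p4 (T : finType) (M : matroid T) (i : nat) :
  (exists A : {set T}, inD M A && (rk M A + 2 == #|A|)%N) ->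
  (mrank M)%:Z - (dk M 2)%:Z < i%:Z ->
  (tutte_x1 M)`_i =
    binz (#|T|%:Z - i%:Z - 1) ((mrank M)%:Z - i%:Z)
    - \sum_(C : {set T} | is_circuit M C && (#|C| < dk M 2)%N)
        binz (#|T|%:Z - #|C|%:Z - i%:Z - 1) (#|T|%:Z - (mrank M)%:Z - 1).
Proof.
move=> [S0 /andP [inS0 /eqP eS0]] hi.
have hd0 : (0 < dk M 2)%N.
  rewrite /dk; apply: (big_ind (fun x => 0 < x)%N) => //.
    by move=> x y hx hy; rewrite leq_min hx hy.
  by move=> A /andP [_ /eqP <-]; rewrite addn2.
have hrn : (mrank M + 2 <= #|T|)%N.
  have := rk_sub_le (M:=M) (subsetT S0); rewrite cardsDS ?subsetT // cardsT /mrank; have := max_card S0; lia.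
have hK : (mrank M - i < dk M 2)%N by lia.
set r := mrank M in hi hrn hK *; set d := dk M 2 in hi hd0 hK *; set n := #|T| in hrn *.
pose g k := (('X - 1 : {poly int})^+(r - k))`_i.
pose h (A : {set T}) := if (#|A| <= r - i)%N then g #|A| else 0.
pose P (C : {set T}) := is_circuit M C && (#|C| < d)%N.
have gz : forall k, (r - i < k)%N -> (k <= r)%N -> g k = 0.
  move=> k hk hk'; apply: coef_big; lia.
have hF : forall k, (if (k <= r - i)%N then g k else 0) = if (k <= r)%N then g k else 0.
  move=> k; case: (leqP k (r - i)) => hk; first by rewrite (_ : (k <= r)%N) //; lia.
  by case: ifP => // hkr; rewrite gz.
rewrite tutte_coef.
have step2 : forall A : {set T}, (if rk M A == #|A| then (('X - 1 : {poly int})^+(mrank M - #|A|))`_i else 0)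
   = h A - \sum_(C | P C && (C \subset A)) h A.
  move=> A; rewrite -/r -/(g #|A|) /h.
  case: (leqP #|A| (r - i)) => hA; last first.
    rewrite big1 ?subr0 //; case: ifP => // /eqP ind; apply: gz => //.
    by rewrite -ind; apply: rk_mono; apply: subsetT.
  have hAd : (#|A| < d)%N by lia.
  case: (boolP (rk M A == #|A|)) => [/eqP ind | dep].
    rewrite big_pred0 ?subr0 // => C; apply/negbTE/negP => /andP [/andP [hc _] s].
    exact: circuit_not_indep hc s ind.
  have ltA : (rk M A < #|A|)%N by have := rk_le_card M A; move: dep => /eqP; lia.
  have [C0 hC0 sC0] := exists_circuit ltA.
  have PC0 : P C0 && (C0 \subset A).
    by rewrite /P hC0 sC0 /= andbT; apply: leq_ltn_trans hAd; apply: subset_leq_card.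
  rewrite (bigD1 C0) //= big_pred0 ?addr0 ?subrr // => C.
  apply/negbTE/negP => /andP [/andP [/andP [hc _] s] ne].
  by move/eqP: ne; apply; apply: (circuit_unique hAd hc hC0 s sC0).
rewrite (eq_bigr _ (fun A _ => step2 A)) sumrB.
have -> : \sum_(A : {set T}) \sum_(C | P C && (C \subset A)) h A
    = \sum_(C : {set T} | P C) \sum_(A : {set T} | C \subset A) h A.
  rewrite (eq_bigr (fun A : {set T} => \sum_(C : {set T} | P C) (if C \subset A then h A else 0))); last first.
    by move=> A _; rewrite big_mkcondr.
  rewrite exchange_big /=; apply: eq_bigr => C _; by rewrite [RHS]big_mkcond.
congr (_ - _).
  rewrite (eq_bigl (fun B : {set T} => B \subset [set: T])); last by move=> B; rewrite subsetT.
  rewrite /h (sub_sum _ [set: T] (fun k => if (k <= r - i)%N then g k else 0)) cardsT.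
  rewrite (eq_bigr (fun k : 'I_n.+1 => (if (k <= r)%N then g k else 0) *+ 'C(n, k))); last by move=> k _; rewrite hF.
  rewrite widen_sum; last by lia.
  rewrite Pcoef; last by lia.
  case: (leqP i r) => hir.
    rewrite (_ : n%:Z - i%:Z - 1 = (n - 1 - i)%N%:Z); last by lia.
    by rewrite (_ : r%:Z - i%:Z = (r - i)%N%:Z) ?binz_nat //; lia.
  by rewrite binz_negr //; lia.
apply: eq_bigr => C /andP [hC hCd].
rewrite /h (sup_sum _ C (fun k => if (k <= r - i)%N then g k else 0)).
rewrite (sub_sum _ (~: C) (fun k => if ((k + #|C|) <= r - i)%N then g (k + #|C|) else 0)) cardsCs setCK.
have hc : (#|C| <= n)%N by apply: max_card.
have hc1 : (0 < #|C|)%N by have [e _] := @circuitE T M C hC; lia.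
case: (leqP (#|C| + i) r) => hci.
  rewrite (eq_bigr (fun k : 'I_(n - #|C|).+1 => (if (k <= r - #|C|)%N then
     (('X - 1 : {poly int})^+((r - #|C|) - k))`_i else 0) *+ 'C(n - #|C|, k))); last first.
    move=> k _; rewrite hF /g.
    have -> : (k + #|C| <= r)%N = (k <= r - #|C|)%N by lia.
    by rewrite subnDA subnAC.
  rewrite (widen_sum _ _ (fun k => (('X - 1 : {poly int})^+((r - #|C|) - k))`_i) (fun k => 'C(n - #|C|, k))); last by lia.
  rewrite Pcoef; last by lia.
  rewrite (_ : (i <= r - #|C|)%N) //; last by lia.
  rewrite (_ : n%:Z - #|C|%:Z - i%:Z - 1 = (n - #|C| - 1 - i)%N%:Z); last by lia.
  rewrite (_ : n%:Z - r%:Z - 1 = (n - r - 1)%N%:Z); last by lia.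
  rewrite binz_nat; congr Posz.
  rewrite -(@bin_sub (n - #|C| - 1 - i) (r - #|C| - i)); last by lia.
  congr binomial; lia.
rewrite big1; last first.
  move=> k _.
  rewrite (_ : (k + #|C| <= r - i)%N = false) ?mul0rn //; apply/negbTE; rewrite -ltnNge; move: hci hc1 (leq_addl k #|C|); generalize (k + #|C|)%N; move=> x; lia.
case: (ltrP (n%:Z - #|C|%:Z - i%:Z - 1) 0) => hN; first by rewrite binz_negl.
rewrite (_ : n%:Z - #|C|%:Z - i%:Z - 1 = (n - #|C| - i - 1)%N%:Z); last by lia.
rewrite (_ : n%:Z - r%:Z - 1 = (n - r - 1)%N%:Z); last by lia.
by rewrite binz_nat bin_small //; lia.
Qed.
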